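(* For real $p$, the inequalities $$\left( \frac{\sin x}{x}\right) ^{2p}+\left( \frac{\tan x}{x}\right)^{p}>\left( \frac{x}{\sin x}\right) ^{2p}+\left( \frac{x}{\tan x}\right)^{p}>2$$ hold for all $x\in(0,\pi/2)$ if and only if $p\geq \frac{\ln 2}{2(\ln \pi -\ln 2)}$. *)

(* Defs.v *)
From Stdlib Require Export Reals.
Open Scope R_scope.

(* Main.v *)
Require Import Defs.
From Stdlib Require Import Reals.
From Stdlib Require Import Lra Lia Factorial ZArith.
Open Scope R_scope.

Lemma INR_fact_S n : INR (fact (S n)) = INR (S n) * INR (fact n).
Proof. rewrite fact_simpl, mult_INR; reflexivity. Qed.
Ltac expand_approx := unfold cos_approx, cos_term, sin_approx, sin_term;
  cbn [sum_f_R0 Nat.mul Nat.add]; repeat rewrite INR_fact_S; cbn [fact INR].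

Lemma exp_le_mono a b : a <= b -> exp a <= exp b.
Proof. intros [H|H]; [left; apply exp_increasing; auto| subst; lra]. Qed.
Lemma ln_le_mono a b : 0 < a -> a <= b -> ln a <= ln b.
Proof. intros Ha [H|H]; [left; apply ln_increasing; auto| subst; lra]. Qed.
Lemma Rpower_gt0 a b : 0 < Rpower a b.
Proof. unfold Rpower; apply exp_pos. Qed.
Lemma Rpower_pow_r a r n : 0 < a -> (Rpower a r)^n = Rpower a (r * INR n).
Proof. intros Ha. rewrite <- Rpower_pow by apply Rpower_gt0. apply Rpower_mult. Qed.
Lemma Rpower_INR a n : 0 < a -> Rpower a (INR n) = a ^ n.
Proof. apply Rpower_pow. Qed.
Lemma pow_lt_inv X Y n : 0 <= X -> 0 <= Y -> Y ^ n < X ^ n -> Y < X.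
Proof.
  intros HX HY H. destruct (Rlt_le_dec Y X) as [h|h]; auto.
  pose proof (pow_incr X Y n (conj HX h)). lra.
Qed.
Lemma Rpower_exp_le1 t r1 r2 : 0 < t <= 1 -> r1 <= r2 -> Rpower t r2 <= Rpower t r1.
Proof.
  intros Ht Hr. unfold Rpower. apply exp_le_mono.
  assert (ln t <= 0) by (rewrite <- ln_1; apply ln_le_mono; lra). nra.
Qed.
Lemma Rpower_base_neg u v z : z <= 0 -> 0 < u <= v -> Rpower v z <= Rpower u z.
Proof.
  intros Hz Huv. unfold Rpower. apply exp_le_mono.
  assert (ln u <= ln v) by (apply ln_le_mono; lra). nra.
Qed.
Lemma Rpower_inv a z : 0 < a -> Rpower (/ a) z = / Rpower a z.
Proof. intros Ha. unfold Rpower. rewrite ln_Rinv by auto. rewrite <- exp_Ropp. f_equal; ring. Qed.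
Lemma Rpower_zero a : Rpower a 0 = 1.
Proof. unfold Rpower. rewrite Rmult_0_l. apply exp_0. Qed.

Lemma lin_der K c : derivable_pt_lim (fun s => s * K) c K.
Proof.
  pose proof (derivable_pt_lim_scal_right id c 1 K (derivable_pt_lim_id c)) as H.
  rewrite Rmult_1_l in H. exact H.
Qed.

Lemma bernoulli_real y r : 0 < y -> 1 <= r -> 1 + r * (y - 1) <= Rpower y r.
Proof.
  intros Hy Hr. unfold Rpower.
  set (L := ln y).
  assert (HyL : y = exp L) by (unfold L; rewrite exp_ln; auto).
  destruct (Req_dec r 1) as [E|E].
  { subst r. replace (1 * L) with L by ring. lra. }
  set (g := fun s => exp (s * L) - s * (exp L - 1)).
  set (g' := fun s => L * exp (s * L) - (exp L - 1)).
  assert (Hd : forall c, 1 <= c <= r -> derivable_pt_lim g c (g' c)).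
  { intros c _. unfold g, g'.
    apply derivable_pt_lim_minus.
    - replace (L * exp (c * L)) with (exp (c*L) * L) by ring.
      apply (derivable_pt_lim_comp (fun s => s * L) exp).
      + apply lin_der.
      + apply derivable_pt_lim_exp.
    - apply lin_der. }
  destruct (MVT_cor2 g g' 1 r ltac:(lra) Hd) as [c [Hc Hc2]].
  assert (Hg' : 0 <= g' c).
  { unfold g'.
    assert (H1 : L * exp L <= L * exp (c * L)).
    { destruct (Rle_lt_dec 0 L) as [HL|HL].
      - apply Rmult_le_compat_l; auto. apply exp_le_mono. nra.
      - apply Rmult_le_compat_neg_l; [lra|]. apply exp_le_mono. nra. }
    assert (H2 : 1 - L <= exp (- L)) by (pose proof (exp_ineq1_le (-L)); lra).
    assert (H3 : exp L * exp (-L) = 1) by (rewrite <- exp_plus; replace (L + - L) with 0 by ring; apply exp_0).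
    pose proof (exp_pos L).
    assert (exp L * (1 - L) <= 1) by (rewrite <- H3; apply Rmult_le_compat_l; lra).
    nra. }
  unfold g in Hc. rewrite Rmult_1_l in Hc. rewrite <- HyL in Hc.
  assert (0 <= g' c * (r - 1)) by (apply Rmult_le_pos; lra).
  lra.
Qed.

Lemma transfer A B q p : 0 < A -> 0 < B -> 0 < q -> q <= p ->
  Rpower A (2*q) + Rpower B q > 2 -> Rpower A (2*p) + Rpower B p > 2.
Proof.
  intros HA HB Hq Hqp H.
  set (r := p / q).
  assert (Hr : 1 <= r) by (unfold r; apply Rmult_le_reg_r with q; auto; unfold Rdiv; rewrite Rmult_assoc, Rinv_l; lra).
  assert (E1 : Rpower A (2*p) = Rpower (Rpower A (2*q)) r) by (rewrite Rpower_mult; f_equal; unfold r; field; lra).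
  assert (E2 : Rpower B p = Rpower (Rpower B q) r) by (rewrite Rpower_mult; f_equal; unfold r; field; lra).
  rewrite E1, E2.
  pose proof (bernoulli_real (Rpower A (2*q)) r (Rpower_gt0 _ _) Hr).
  pose proof (bernoulli_real (Rpower B q) r (Rpower_gt0 _ _) Hr).
  nra.
Qed.

Lemma cos157 : 0 < cos (157/100).
Proof.
  eapply Rlt_le_trans; [|exact (proj1 (pre_cos_bound (157/100) 3 ltac:(lra) ltac:(lra)))].
  expand_approx. lra.
Qed.
Lemma cos1575 : cos (63/40) < 0.
Proof.
  eapply Rle_lt_trans; [exact (proj2 (pre_cos_bound (63/40) 2 ltac:(lra) ltac:(lra)))|].
  expand_approx. lra.
Qed.
Lemma PI_lb : 157/50 < PI.
Proof.
  destruct (Rlt_le_dec (157/50) PI) as [H|H]; auto.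
  pose proof PI2_3_2. pose proof (cos_le_0 (157/100) ltac:(lra) ltac:(lra)).
  pose proof cos157. lra.
Qed.
Lemma PI_ub : PI < 63/20.
Proof.
  destruct (Rlt_le_dec (63/40) (PI/2)) as [H|H].
  - pose proof (cos_gt_0 (63/40) ltac:(pose proof PI_RGT_0; lra) H). pose proof cos1575. lra.
  - destruct H as [H|H]; [lra|]. pose proof cos1575 as H0. rewrite <- H in H0. rewrite cos_PI2 in H0. lra.
Qed.

Definition cc := ln 2 / (ln PI - ln 2).
Lemma lnPI2 : ln (PI/2) = ln PI - ln 2.
Proof. unfold Rdiv. rewrite ln_mult, ln_Rinv; try lra; pose proof PI_RGT_0; lra. Qed.
Lemma lnPI2_pos : 0 < ln PI - ln 2.
Proof. rewrite <- lnPI2. rewrite <- ln_1. apply ln_increasing; pose proof PI_lb; lra. Qed.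
Lemma Rpower_PI2_cc : Rpower (PI/2) cc = 2.
Proof.
  unfold Rpower, cc. rewrite lnPI2. pose proof lnPI2_pos.
  replace (ln 2 / (ln PI - ln 2) * (ln PI - ln 2)) with (ln 2) by (field; lra).
  apply exp_ln; lra.
Qed.
Lemma cc_ge : 3/2 <= cc.
Proof.
  pose proof lnPI2_pos. assert (E : cc * (ln PI - ln 2) = ln 2) by (unfold cc; field; lra).
  rewrite <- lnPI2 in *.
  assert (H1 : ln ((PI/2)^3) <= ln (2^2)).
  { apply ln_le_mono. pose proof PI_lb; apply pow_lt; lra.
    pose proof PI_ub. pose proof PI_lb.
    apply Rle_trans with ((63/40)^3). apply pow_incr; lra. lra. }
  rewrite !ln_pow in H1 by (try pose proof PI_lb; lra). simpl INR in H1. nra.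
Qed.
Lemma num77 : 2^50 <= (157/100)^77.
Proof.
  assert (H : (2^50 * 100^77 <= 157^77)%Z) by (apply Z.leb_le; vm_compute; reflexivity).
  apply IZR_le in H. rewrite mult_IZR in H.
  replace ((2^50)%Z) with (2^Z.of_nat 50)%Z in H by reflexivity.
  replace ((100^77)%Z) with (100^Z.of_nat 77)%Z in H by reflexivity.
  replace ((157^77)%Z) with (157^Z.of_nat 77)%Z in H by reflexivity.
  rewrite <- !pow_IZR in H.
  unfold Rdiv. rewrite Rpow_mult_distr, pow_inv.
  apply Rmult_le_reg_r with (100^77). apply pow_lt; lra.
  rewrite Rmult_assoc, Rinv_l, Rmult_1_r. exact H. apply pow_nonzero; lra.
Qed.
Lemma cc_le : cc <= 77/50.
Proof.
  pose proof lnPI2_pos. assert (E : cc * (ln PI - ln 2) = ln 2) by (unfold cc; field; lra).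
  rewrite <- lnPI2 in *.
  assert (H1 : ln (2^50) <= ln ((PI/2)^77)).
  { apply ln_le_mono. apply pow_lt; lra.
    pose proof PI_lb. apply Rle_trans with ((157/100)^77). apply num77. apply pow_incr; lra. }
  rewrite !ln_pow in H1 by (try pose proof PI_lb; lra). simpl INR in H1. nra.
Qed.

Definition Di1 (y : R) := 120 - 20*y + y^2.
Definition CLi1 (y : R) := 720 - 360*y + 30*y^2 - y^3.
Definition Wi1 (y : R) := 16*Di1 y^3 + 24*(120 - Di1 y)*Di1 y^2 + 6*(120-Di1 y)^2*Di1 y - (120 - Di1 y)^3.
Definition Pi1 (y : R) := 16^4*120^3*CLi1 y^3*Di1 y^9 - 720^3*(32*Di1 y^3 - Wi1 y)^4.
Lemma Pi1_pos y : 0 < y <= 169/100 -> 0 < Pi1 y.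
Proof.
  intros Hy.
  assert (Hid : 3830224792147131369362629348887201408953937846517364173 * Pi1 y = y^2 * (383022479214713136936262934888720140895393784651736417300000000000000000000000000000000 + (838832100911584300236800000000000000 * (y^0 * (169 - 100*y)^25) + 1711167345187359106688614400000000000000 * (y^1 * (169 - 100*y)^24) + 1672041556377947462984773140480000000000000 * (y^2 * (169 - 100*y)^23) + 1041527727586366544403824367370240000000000000 * (y^3 * (169 - 100*y)^22) + 464342441623732857920398473381806080000000000000 * (y^4 * (169 - 100*y)^21) + 157695554022168129062919497340747251712000000000000 * (y^5 * (169 - 100*y)^20) + 42392703036452626972063353054128600042700800000000000 * (y^6 * (169 - 100*y)^19) + 9253996817532244505263181160649518583749017600000000000 * (y^7 * (169 - 100*y)^18) + 1669578049675678333873534678319058987671680450560000000000 * (y^8 * (169 - 100*y)^17) + 252078449424382594537431105289342308190988303073280000000000 * (y^9 * (169 - 100*y)^16) + 32130231672697122002637386240363987022696630332686336000000000 * (y^10 * (169 - 100*y)^15) + 3477806870932361101975439644118629999861475305844637696000000000 * (y^11 * (169 - 100*y)^14) + 320826254418387970069984075700588988757012462733795262464000000000 * (y^12 * (169 - 100*y)^13) + 25263367403216872439196530968644479499552726547583819841536000000000 * (y^13 * (169 - 100*y)^12) + 1697604800666438428470289908765431538547361559121701015052615680000000 * (y^14 * (169 - 100*y)^11) + 97130300836162270984843606301069445931538855660175161469813391360000000 * (y^15 * (169 - 100*y)^10) + 4712103663079044996811940244152621825929022287978066578376151793664000000 * (y^16 * (169 - 100*y)^9) + 192563500323878867005240152336726837254068230307609261138803223953408000000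 * (y^17 * (169 - 100*y)^8) + 6566680756513504165182356147362361345035733663052115851785730115852697600000 * (y^18 * (169 - 100*y)^7) + 184423550246929919949849266596932009528500596981595960702253424899797811200000 * (y^19 * (169 - 100*y)^6) + 4187886832997394737140007752689110277912208173094136493130968959281937203200000 * (y^20 * (169 - 100*y)^5) + 74897712615439855101182969927164228810952409348863197929798315535560087592960000 * (y^21 * (169 - 100*y)^4) + 1014380676998987301019897321992123386516134984724198931876784333857823083472384000 * (y^22 * (169 - 100*y)^3) + 9766481727165976356021548385905787177220886216116006562377127493655686185256960000 * (y^23 * (169 - 100*y)^2) + 59483045361099554905411940335503493438704366750511084582353680317333697984798720000 * (y^24 * (169 - 100*y)^1) + 172024603223324955756133852609443885356922891504001718614990900525886623546966016000 * (y^25 * (169 - 100*y)^0)))) by (unfold Pi1, Wi1, Di1, CLi1; ring).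
  assert (HS : 0 <= 838832100911584300236800000000000000 * (y^0 * (169 - 100*y)^25) + 1711167345187359106688614400000000000000 * (y^1 * (169 - 100*y)^24) + 1672041556377947462984773140480000000000000 * (y^2 * (169 - 100*y)^23) + 1041527727586366544403824367370240000000000000 * (y^3 * (169 - 100*y)^22) + 464342441623732857920398473381806080000000000000 * (y^4 * (169 - 100*y)^21) + 157695554022168129062919497340747251712000000000000 * (y^5 * (169 - 100*y)^20) + 42392703036452626972063353054128600042700800000000000 * (y^6 * (169 - 100*y)^19) + 9253996817532244505263181160649518583749017600000000000 * (y^7 * (169 - 100*y)^18) + 1669578049675678333873534678319058987671680450560000000000 * (y^8 * (169 - 100*y)^17) + 252078449424382594537431105289342308190988303073280000000000 * (y^9 * (169 - 100*y)^16) + 32130231672697122002637386240363987022696630332686336000000000 * (y^10 * (169 - 100*y)^15) + 3477806870932361101975439644118629999861475305844637696000000000 * (y^11 * (169 - 100*y)^14) + 320826254418387970069984075700588988757012462733795262464000000000 * (y^12 * (169 - 100*y)^13) + 25263367403216872439196530968644479499552726547583819841536000000000 * (y^13 * (169 - 100*y)^12) + 1697604800666438428470289908765431538547361559121701015052615680000000 * (y^14 * (169 - 100*y)^11) + 97130300836162270984843606301069445931538855660175161469813391360000000 * (y^15 * (169 - 100*y)^10) + 4712103663079044996811940244152621825929022287978066578376151793664000000 * (y^16 * (169 - 100*y)^9) + 192563500323878867005240152336726837254068230307609261138803223953408000000 * (y^17 * (169 - 100*y)^8) + 6566680756513504165182356147362361345035733663052115851785730115852697600000 * (y^18 * (169 -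 100*y)^7) + 184423550246929919949849266596932009528500596981595960702253424899797811200000 * (y^19 * (169 - 100*y)^6) + 4187886832997394737140007752689110277912208173094136493130968959281937203200000 * (y^20 * (169 - 100*y)^5) + 74897712615439855101182969927164228810952409348863197929798315535560087592960000 * (y^21 * (169 - 100*y)^4) + 1014380676998987301019897321992123386516134984724198931876784333857823083472384000 * (y^22 * (169 - 100*y)^3) + 9766481727165976356021548385905787177220886216116006562377127493655686185256960000 * (y^23 * (169 - 100*y)^2) + 59483045361099554905411940335503493438704366750511084582353680317333697984798720000 * (y^24 * (169 - 100*y)^1) + 172024603223324955756133852609443885356922891504001718614990900525886623546966016000 * (y^25 * (169 - 100*y)^0)) by (repeat apply Rplus_le_le_0_compat; apply Rmult_le_pos; first [lra | apply Rmult_le_pos; apply pow_le; lra]).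
  assert (0 < y^2) by (apply pow_lt; lra).
  nra.
Qed.


Lemma Wi1_sq y : 0 < y <= 169/100 -> Wi1 y ^2 <= 256*120^3*Di1 y^3.
Proof.
  intros Hy.
  assert (Hid : 665416609183179841 * (256*120^3*Di1 y^3 - Wi1 y ^2) = y^4 * (66541660918317984100000000 + (27548000000 * (y^0 * (169 - 100*y)^8) + 20325145600000 * (y^1 * (169 - 100*y)^7) + 6557081105920000 * (y^2 * (169 - 100*y)^6) + 1208125988080384000 * (y^3 * (169 - 100*y)^5) + 139047805965683148800 * (y^4 * (169 - 100*y)^4) + 10237018302370729104000 * (y^5 * (169 - 100*y)^3) + 470811824454801644686640 * (y^6 * (169 - 100*y)^2) + 12367293270064217301242680 * (y^7 * (169 - 100*y)^1) + 142062122479242898074688159 * (y^8 * (169 - 100*y)^0)))) by (unfold Wi1, Di1; ring).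
  assert (HS : 0 <= 27548000000 * (y^0 * (169 - 100*y)^8) + 20325145600000 * (y^1 * (169 - 100*y)^7) + 6557081105920000 * (y^2 * (169 - 100*y)^6) + 1208125988080384000 * (y^3 * (169 - 100*y)^5) + 139047805965683148800 * (y^4 * (169 - 100*y)^4) + 10237018302370729104000 * (y^5 * (169 - 100*y)^3) + 470811824454801644686640 * (y^6 * (169 - 100*y)^2) + 12367293270064217301242680 * (y^7 * (169 - 100*y)^1) + 142062122479242898074688159 * (y^8 * (169 - 100*y)^0)) by (repeat apply Rplus_le_le_0_compat; apply Rmult_le_pos; first [lra | apply Rmult_le_pos; apply pow_le; lra]).
  assert (0 < y^4) by (apply pow_lt; lra).
  nra.
Qed.

Lemma frac_lt X Y Z T : 0 < Y -> 0 < T -> X * T < Z * Y -> X / Y < Z / T.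
Proof.
  intros HY HT H. apply Rmult_lt_reg_r with (Y*T). nra.
  replace (X / Y * (Y * T)) with (X*T) by (field; lra).
  replace (Z / T * (Y * T)) with (Z*Y) by (field; lra). lra.
Qed.

Lemma div_nonneg a b : 0 <= a -> 0 < b -> 0 <= a / b.
Proof. intros. unfold Rdiv. apply Rmult_le_pos; auto. left; apply Rinv_0_lt_compat; auto. Qed.

Lemma sq_le_inv X Y : 0 <= X -> Y^2 <= X^2 -> Y <= X.
Proof. intros HX H. destruct (Rle_lt_dec Y X) as [h|h]; auto. nra. Qed.

Lemma region1 x : 0 < x <= 13/10 ->
  Rpower (x / sin x) (3/2) + Rpower (x * cos x / sin x) (3/4) > 2.
Proof.
  intros Hx.
  set (y := x^2).
  assert (Hy : 0 < y <= 169/100) by (unfold y; split; nra).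
  assert (Hs0 : 0 < sin x) by (apply sin_gt_0; pose proof PI_lb; lra).
  assert (HsU : sin x <= x * Di1 y / 120).
  { destruct (pre_sin_bound x 0 ltac:(lra) ltac:(lra)) as [_ U]. revert U. expand_approx.
    unfold Di1, y. intros U. lra. }
  assert (HcL : CLi1 y / 720 <= cos x).
  { destruct (pre_cos_bound x 1 ltac:(lra) ltac:(lra)) as [U _]. revert U. expand_approx.
    unfold CLi1, y. intros U. lra. }
  assert (HD : 0 < Di1 y) by (unfold Di1; nra).
  assert (HC : 0 < CLi1 y) by (unfold CLi1; nra).
  set (Dv := Di1 y) in *. set (Cv := CLi1 y) in *.
  pose proof (Pi1_pos y Hy) as HP. pose proof (Wi1_sq y Hy) as HW.
  unfold Pi1 in HP. fold Dv Cv in HP, HW. fold (Wi1 y) in HP.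
  set (Wv := Wi1 y) in *.
  set (a := x / sin x).
  assert (Ha : 120 / Dv <= a).
  { unfold a. apply Rmult_le_reg_r with (sin x * Dv); [nra|].
    replace (120 / Dv * (sin x * Dv)) with (120 * sin x) by (field; lra).
    replace (x / sin x * (sin x * Dv)) with (x * Dv) by (field; lra). lra. }
  assert (HA0 : 0 < 120 / Dv) by (apply Rdiv_lt_0_compat; lra).
  assert (Ha0 : 0 < a) by lra.
  set (V := Rpower a (3/2)).
  assert (HV2 : V^2 = a^3).
  { unfold V. rewrite Rpower_pow_r by auto. rewrite <- Rpower_INR by auto. f_equal. simpl. lra. }
  set (VL := Wv / (16 * Dv^3)).
  assert (HVL : VL <= V).
  { destruct (Rle_lt_dec VL 0) as [h|h]. pose proof (Rpower_gt0 a (3/2)). fold V in H. lra.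
    apply sq_le_inv. left; apply Rpower_gt0.
    rewrite HV2.
    apply Rle_trans with ((120/Dv)^3).
    - assert (E : (120/Dv)^3 - VL^2 = (256*120^3*Dv^3 - Wv^2)/(256*Dv^6)) by (unfold VL; field; lra).
      assert (0 <= (256*120^3*Dv^3 - Wv^2)/(256*Dv^6)).
      { apply div_nonneg. lra. apply Rmult_lt_0_compat; [lra| apply pow_lt; lra]. }
      lra.
    - apply pow_incr. lra. }
  set (b := x * cos x / sin x).
  assert (Hb : 120/Dv * (Cv/720) <= b).
  { replace b with (a * cos x) by (unfold a, b; field; lra).
    apply Rmult_le_compat; try lra; apply div_nonneg; lra. }
  assert (Hbp : 0 < 120/Dv * (Cv/720)) by (apply Rmult_lt_0_compat; [lra| apply Rdiv_lt_0_compat; lra]).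
  set (Bq := Rpower b (3/4)).
  assert (HB4 : Bq^4 = b^3).
  { unfold Bq. rewrite Rpower_pow_r by lra. rewrite <- Rpower_INR by lra. f_equal. simpl. lra. }
  assert (HBq : 0 < Bq) by apply Rpower_gt0.
  destruct (Rle_lt_dec 2 VL) as [h|h]; [lra|].
  assert (E1 : (120/Dv*(Cv/720))^3 - (2-VL)^4 =
     (16^4*120^3*Cv^3*Dv^9 - 720^3*(32*Dv^3 - Wv)^4)/(720^3*16^4*Dv^12)) by (unfold VL; field; lra).
  assert (0 < (16^4*120^3*Cv^3*Dv^9 - 720^3*(32*Dv^3 - Wv)^4)/(720^3*16^4*Dv^12)).
  { apply Rdiv_lt_0_compat. lra. apply Rmult_lt_0_compat; [lra| apply pow_lt; lra]. }
  assert (Hb3 : (120/Dv*(Cv/720))^3 <= b^3) by (apply pow_incr; lra).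
  assert (2 - VL < Bq) by (apply pow_lt_inv with 4%nat; lra).
  lra.
Qed.

Definition Cui2 (e : R) := 24 - 12*e^2 + e^4.
Definition G2 (e : R) := 2400 - 1884*e + 157*e^3.
Definition Ri2 (e : R) := 25^5*3768^5*(157-100*e)^4*(6-e^2)^4*Cui2 e - 77^5*100^4*6^4*24*e*G2 e^5.
Lemma Ri2_pos e : 0 <= e <= 11/40 -> 0 < Ri2 e.
Proof.
  intros He.
  assert (Hid : 45949729863572161 * Ri2 e = 459497298635721610000000000000000000000000000000000 + (140164613353067777804119777280000000000 * (e^0 * (11 - 40*e)^16) + 78402626661260980272403084083200000000000 * (e^1 * (11 - 40*e)^15) + 20469852526293118465707285330800640000000000 * (e^2 * (11 - 40*e)^14) + 3309839110758171634460513500128870400000000000 * (e^3 * (11 - 40*e)^13) + 370775221885631576866722341523841653760000000000 * (e^4 * (11 - 40*e)^12) + 30492910079331022830205337488002587443200000000000 * (e^5 * (11 - 40*e)^11) + 1902951195485832720943936941757462322504499200000000 * (e^6 * (11 - 40*e)^10) + 91831241158691893289486176257610598208634880000000000 * (e^7 * (11 - 40*e)^9) + 3458717116382481257401890207957842918696635392000000000 * (e^8 * (11 - 40*e)^8) + 101836991964044822289899392180702552481749975040000000000 * (e^9 * (11 - 40*e)^7) + 2330858835596450126894363870607242041435514125568000000000 * (e^10 * (11 - 40*e)^6) + 40902920189055806342992367993907844242509134725120000000000 * (e^11 * (11 - 40*e)^5) + 536960927764566987685118594547604374737638030849216000000000 * (e^12 * (11 - 40*e)^4) + 5060780780077765074732449810454161088192318135208960000000000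 * (e^13 * (11 - 40*e)^3) + 31905434290206870801835638703634752870656228141302016000000000 * (e^14 * (11 - 40*e)^2) + 117539462875290536759234997463682267117485437543649280000000000 * (e^15 * (11 - 40*e)^1) + 181388957032737575576418535043710476149091670683453094400000000 * (e^16 * (11 - 40*e)^0))) by (unfold Ri2, Cui2, G2; ring).
  assert (HS : 0 <= 140164613353067777804119777280000000000 * (e^0 * (11 - 40*e)^16) + 78402626661260980272403084083200000000000 * (e^1 * (11 - 40*e)^15) + 20469852526293118465707285330800640000000000 * (e^2 * (11 - 40*e)^14) + 3309839110758171634460513500128870400000000000 * (e^3 * (11 - 40*e)^13) + 370775221885631576866722341523841653760000000000 * (e^4 * (11 - 40*e)^12) + 30492910079331022830205337488002587443200000000000 * (e^5 * (11 - 40*e)^11) + 1902951195485832720943936941757462322504499200000000 * (e^6 * (11 - 40*e)^10) + 91831241158691893289486176257610598208634880000000000 * (e^7 * (11 - 40*e)^9) + 3458717116382481257401890207957842918696635392000000000 * (e^8 * (11 - 40*e)^8) + 101836991964044822289899392180702552481749975040000000000 * (e^9 * (11 - 40*e)^7) + 2330858835596450126894363870607242041435514125568000000000 * (e^10 * (11 - 40*e)^6) + 40902920189055806342992367993907844242509134725120000000000 * (e^11 * (11 - 40*e)^5) + 536960927764566987685118594547604374737638030849216000000000 * (e^12 * (11 - 40*e)^4) + 5060780780077765074732449810454161088192318135208960000000000 * (e^13 * (11 - 40*e)^3) + 31905434290206870801835638703634752870656228141302016000000000 * (e^14 * (11 - 40*e)^2) + 117539462875290536759234997463682267117485437543649280000000000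 * (e^15 * (11 - 40*e)^1) + 181388957032737575576418535043710476149091670683453094400000000 * (e^16 * (11 - 40*e)^0)) by (repeat apply Rplus_le_le_0_compat; apply Rmult_le_pos; first [lra | apply Rmult_le_pos; apply pow_le; lra]).
  nra.
Qed.

Lemma region2 x : 13/10 < x < PI/2 ->
  Rpower (x / sin x) cc + Rpower (x * cos x / sin x) (cc/2) > 2.
Proof.
  intros Hx. pose proof PI_lb as Hpl. pose proof PI_ub as Hpu.
  pose proof cc_ge as Hc1. pose proof cc_le as Hc2.
  set (e := PI/2 - x).
  assert (He : 0 < e < 11/40) by (unfold e; lra).
  assert (Hxe : x = PI/2 - e) by (unfold e; ring).
  assert (Es : sin x = cos e) by (rewrite Hxe; apply sin_shift).
  assert (Ec : cos x = sin e) by (rewrite Hxe; apply cos_shift).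
  rewrite Es, Ec.
  destruct (pre_cos_bound e 0 ltac:(lra) ltac:(lra)) as [cL cU]. revert cL cU. expand_approx. intros cL cU.
  destruct (pre_sin_bound e 0 ltac:(lra) ltac:(lra)) as [sL sU]. revert sL sU. expand_approx. intros sL sU.
  assert (Hce : 0 < cos e) by nra.
  assert (HCU : cos e <= Cui2 e / 24) by (unfold Cui2; lra).
  assert (HCU0 : 0 < Cui2 e) by (unfold Cui2; nra).
  set (w := (x / (PI/2)) / cos e).
  assert (Hw0 : 0 < w) by (unfold w; apply Rdiv_lt_0_compat; [apply Rdiv_lt_0_compat|]; lra).
  assert (Hw1 : w <= 1).
  { unfold w. apply Rmult_le_reg_r with (cos e); auto.
    replace (x / (PI / 2) / cos e * cos e) with (1 - 2*e/PI) by (rewrite Hxe; field; repeat split; lra).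
    assert (e * PI <= 4) by nra.
    assert (2*e/PI >= e^2/2).
    { assert (E : 2*e/PI - e^2/2 = e*(4 - e*PI)/(2*PI)) by (field; lra).
      assert (0 <= e*(4 - e*PI)/(2*PI)) by (apply div_nonneg; nra).
      lra. }
    lra. }
  assert (Ea : x / cos e = PI/2 * w) by (unfold w; field; repeat split; lra).
  rewrite Ea, <- Rpower_mult_distr, Rpower_PI2_cc by lra.
  assert (HW1 : 1 + 77/50 * (w - 1) <= Rpower w cc).
  { apply Rle_trans with (Rpower w (77/50)). apply bernoulli_real; lra.
    apply Rpower_exp_le1; lra. }
  set (b := x * sin e / cos e).
  assert (Hb0 : 0 < b) by (unfold b; apply Rdiv_lt_0_compat; [apply Rmult_lt_0_compat|]; nra).
  assert (Hb1 : b <= 1).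
  { unfold b. apply Rmult_le_reg_r with (cos e); auto.
    replace (x * sin e / cos e * cos e) with (x * sin e) by (field; repeat split; lra).
    assert (sin e <= 3/10) by nra. assert (0 <= sin e) by nra. assert (cos e >= 9/10) by nra. nra. }
  assert (HB : Rpower b (4/5) <= Rpower b (cc/2)) by (apply Rpower_exp_le1; lra).
  set (Y := 77/25 * (1 - w)).
  assert (Hkey : Y < Rpower b (4/5)).
  { destruct (Rle_lt_dec Y 0) as [h|h]. pose proof (Rpower_gt0 b (4/5)); lra.
    set (TL := (157/100 - e) * (e - e^3/6) / (Cui2 e / 24)).
    set (YU := 77/25 * (1 - (1 - 100*e/157) / (Cui2 e / 24))).
    assert (HTL : 0 <= TL <= b).
    { unfold TL, b. split.
      - apply div_nonneg. apply Rmult_le_pos; nra. lra.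
      - apply Rle_trans with ((157/100 - e) * (e - e^3/6) / cos e).
        + unfold Rdiv. apply Rmult_le_compat_l. apply Rmult_le_pos; nra.
          apply Rinv_le_contravar; lra.
        + unfold Rdiv. apply Rmult_le_compat_r. left; apply Rinv_0_lt_compat; lra.
          apply Rmult_le_compat; nra. }
    assert (HYU : Y <= YU).
    { unfold Y, YU. apply Rmult_le_compat_l; [lra|].
      assert ((1 - 100*e/157) / (Cui2 e / 24) <= w); [|lra].
      unfold w. apply Rle_trans with ((1 - 100*e/157) / cos e).
      - unfold Rdiv. apply Rmult_le_compat_l. nra. apply Rinv_le_contravar; lra.
      - unfold Rdiv. apply Rmult_le_compat_r. left; apply Rinv_0_lt_compat; lra.
        assert (Ex : x * / (PI * / 2) = 1 - 2*e/PI) by (rewrite Hxe; field; lra). rewrite Ex.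
        assert (2*e/PI <= 100*e/157); [|lra].
        assert (E : 100*e/157 - 2*e/PI = e*(100*PI - 314)/(157*PI)) by (field; lra).
        assert (0 <= e*(100*PI - 314)/(157*PI)) by (apply div_nonneg; nra).
        lra. }
    assert (HR : YU^5 < TL^4).
    { pose proof (Ri2_pos e ltac:(lra)) as HRi.
      assert (E : TL^4 - YU^5 = e^4 * 24^4 * Ri2 e / (Cui2 e^5 * (100^4*6^4*25^5*3768^5))).
      { assert (0 < 24 - 12*e^2 + e^4) by (unfold Cui2 in HCU0; lra).
        unfold TL, YU, Ri2, G2, Cui2. field. lra. }
      assert (0 < e^4 * 24^4 * Ri2 e / (Cui2 e^5 * (100^4*6^4*25^5*3768^5))).
      { apply Rdiv_lt_0_compat. apply Rmult_lt_0_compat; [apply Rmult_lt_0_compat; [apply pow_lt; lra| lra] | lra].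
        apply Rmult_lt_0_compat; [apply pow_lt; lra| lra]. }
      lra. }
    apply pow_lt_inv with 5%nat. left; apply Rpower_gt0. lra.
    rewrite Rpower_pow_r by lra.
    replace (4/5 * INR 5) with (INR 4) by (simpl; lra). rewrite Rpower_INR by lra.
    apply Rle_lt_trans with (YU^5). apply pow_incr; lra.
    apply Rlt_le_trans with (TL^4). lra. apply pow_incr; lra. }
  unfold Y in Hkey. fold b. lra.
Qed.
Lemma sin3 x : 0 < x < PI/2 -> x^3 * cos x < (sin x)^3.
Proof.
  intros Hx. pose proof PI_ub.
  destruct (pre_sin_bound x 0 ltac:(lra) ltac:(lra)) as [sL _]. revert sL. expand_approx. intros sL.
  destruct (pre_cos_bound x 0 ltac:(lra) ltac:(lra)) as [_ cU]. revert cU. expand_approx. intros cU.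
  assert (H0 : 0 < x - x^3/6) by nra.
  assert (H1 : (x - x^3/6)^3 <= (sin x)^3) by (apply pow_incr; lra).
  assert (H2 : x^3 * cos x <= x^3 * (1 - x^2/2 + x^4/24)) by (apply Rmult_le_compat_l; [apply pow_le; lra| lra]).
  assert (H3 : (x - x^3/6)^3 - x^3 * (1 - x^2/2 + x^4/24) = x^7 * (1/24 - x^2/216)) by field.
  assert (0 < x^7 * (1/24 - x^2/216)) by (apply Rmult_lt_0_compat; [apply pow_lt; lra| nra]).
  lra.
Qed.

Lemma core p x : cc/2 <= p -> 0 < x < PI/2 ->
  Rpower (x / sin x) (2*p) + Rpower (x * cos x / sin x) p > 2.
Proof.
  intros Hp Hx. pose proof PI_lb. pose proof cc_ge.
  assert (Hs : 0 < sin x) by (apply sin_gt_0; lra).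
  assert (Hc : 0 < cos x) by (apply cos_gt_0; lra).
  assert (HA : 0 < x / sin x) by (apply Rdiv_lt_0_compat; lra).
  assert (HB : 0 < x * cos x / sin x) by (apply Rdiv_lt_0_compat; [apply Rmult_lt_0_compat|]; lra).
  destruct (Rle_lt_dec x (13/10)) as [h|h].
  - apply transfer with (3/4); try lra.
    replace (2 * (3/4)) with (3/2) by field. apply region1; lra.
  - apply transfer with (cc/2); try lra.
    replace (2 * (cc/2)) with cc by field. apply region2; lra.
Qed.

Lemma Rpower_sq a p : 0 < a -> Rpower a (2*p) = Rpower (a^2) p.
Proof. intros Ha. unfold Rpower. rewrite ln_pow by auto. f_equal. simpl INR. ring. Qed.

Lemma if_dir p x : cc/2 <= p -> 0 < x < PI/2 ->
     Rpower (sin x / x) (2 * p) + Rpower (tan x / x) p >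
       Rpower (x / sin x) (2 * p) + Rpower (x / tan x) p /\
     Rpower (x / sin x) (2 * p) + Rpower (x / tan x) p > 2.
Proof.
  intros Hp Hx. pose proof PI_lb. pose proof cc_ge.
  assert (Hs : 0 < sin x) by (apply sin_gt_0; lra).
  assert (Hc : 0 < cos x) by (apply cos_gt_0; lra).
  set (a := x / sin x). set (b := x * cos x / sin x).
  assert (HA : 0 < a) by (apply Rdiv_lt_0_compat; lra).
  assert (HB : 0 < b) by (apply Rdiv_lt_0_compat; [apply Rmult_lt_0_compat|]; lra).
  assert (Eb : x / tan x = b) by (unfold b, tan; field; lra).
  assert (Ea' : sin x / x = / a) by (unfold a; field; lra).
  assert (Eb' : tan x / x = / b) by (unfold b, tan; field; lra).
  rewrite Eb, Ea', Eb'. rewrite !Rpower_inv by auto.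
  pose proof (core p x Hp Hx) as Hcore. fold a b in Hcore.
  split; [|exact Hcore].
  set (u := Rpower a (2*p)). set (v := Rpower b p).
  assert (Hu : 0 < u) by apply Rpower_gt0. assert (Hv : 0 < v) by apply Rpower_gt0.
  assert (Huv : u * v < 1).
  { unfold u, v. rewrite Rpower_sq by auto. rewrite Rpower_mult_distr by (try apply pow_lt; lra).
    assert (Hm : 0 < a^2 * b) by (apply Rmult_lt_0_compat; [apply pow_lt|]; lra).
    assert (Hm1 : a^2 * b < 1).
    { pose proof (sin3 x Hx).
      assert (E : a^2 * b = x^3 * cos x / (sin x)^3) by (unfold a, b; field; lra).
      rewrite E. apply Rmult_lt_reg_r with ((sin x)^3). apply pow_lt; lra.
      unfold Rdiv. rewrite Rmult_assoc, Rinv_l, Rmult_1_r. lra. apply pow_nonzero; lra. }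
    unfold Rpower. rewrite <- exp_0. apply exp_increasing.
    assert (ln (a^2*b) < 0) by (rewrite <- ln_1; apply ln_increasing; lra).
    nra. }
  assert (E : / u + / v = (u + v) / (u * v)) by (field; lra).
  rewrite E. apply Rlt_gt. apply Rmult_lt_reg_r with (u*v). nra.
  unfold Rdiv. rewrite Rmult_assoc, Rinv_l, Rmult_1_r by nra. nra.
Qed.
Lemma near_pi2 e : 0 < e <= 1/2 ->
  0 < PI/2 - e < PI/2 /\ sin (PI/2 - e) = cos e /\ cos (PI/2 - e) = sin e /\
  1 - e <= cos e /\ 7/8 <= cos e /\ 0 < sin e <= e.
Proof.
  intros He. pose proof PI_lb. pose proof PI_ub.
  destruct (pre_cos_bound e 0 ltac:(lra) ltac:(lra)) as [cL _]. revert cL. expand_approx. intros cL.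
  destruct (pre_sin_bound e 0 ltac:(lra) ltac:(lra)) as [sL sU]. revert sL sU. expand_approx. intros sL sU.
  split; [lra|]. split; [apply sin_shift|]. split; [apply cos_shift|].
  assert (h3 : 0 < e^3) by (apply pow_lt; lra).
  assert (h4 : 0 <= e^3 * (1/6 - e^2/120)) by (apply Rmult_le_pos; nra).
  assert (h5 : e^3/6 < e) by nra.
  split; [nra|]. split; [nra|]. split; nra.
Qed.

Lemma onlyif_dir p :
  (forall x : R, 0 < x < PI / 2 ->
     Rpower (sin x / x) (2 * p) + Rpower (tan x / x) p >
       Rpower (x / sin x) (2 * p) + Rpower (x / tan x) p /\
     Rpower (x / sin x) (2 * p) + Rpower (x / tan x) p > 2) -> cc/2 <= p.
Proof.
  intros H. pose proof PI_lb. pose proof PI_ub.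
  destruct (Rle_lt_dec (cc/2) p) as [h|h]; auto. exfalso.
  destruct (Rtotal_order p 0) as [Hn|[Hz|Hpos]].
  -
    set (K := Rpower (7/16) (2*p)).
    set (g := exp (ln (K+1) / p)).
    assert (HK : 0 < K) by apply Rpower_gt0.
    assert (Hg : 0 < g) by apply exp_pos.
    set (e := Rmin (1/2) (g/3)).
    assert (He : 0 < e <= 1/2).
    { unfold e. split. apply Rmin_glb_lt; lra. apply Rmin_l. }
    assert (Heg : e <= g/3) by apply Rmin_r.
    destruct (near_pi2 e He) as (Hx & Es & Ec & Hc1 & Hc2 & Hse).
    destruct (H _ Hx) as [HF1 _].
    set (x := PI/2 - e) in *.
    assert (Hsx : 0 < sin x) by lra.
    assert (T1 : Rpower (sin x / x) (2*p) <= K).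
    { apply Rpower_base_neg; [lra|]. split; [lra|].
      assert (E : sin x / x - 7/16 = (16*sin x - 7*x)/(16*x)) by (field; lra).
      assert (0 <= (16*sin x - 7*x)/(16*x)) by (apply div_nonneg; lra). lra. }
    assert (T2 : Rpower (tan x / x) p <= 1).
    { replace 1 with (Rpower 1 p) by (unfold Rpower; rewrite ln_1, Rmult_0_r; apply exp_0).
      apply Rpower_base_neg; [lra|]. split; [lra|].
      unfold tan. rewrite Es, Ec.
      apply Rmult_le_reg_r with (x * sin e); [nra|].
      replace (cos e / sin e / x * (x * sin e)) with (cos e) by (field; split; lra).
      nra. }
    assert (T3 : K + 1 <= Rpower (x / tan x) p).
    { replace (K + 1) with (Rpower g p).
      - apply Rpower_base_neg; [lra|]. split.
        + unfold tan. rewrite Es, Ec. apply Rdiv_lt_0_compat; [lra|]. apply Rdiv_lt_0_compat; lra.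
        + unfold tan. rewrite Es, Ec.
          replace (x / (cos e / sin e)) with (x * sin e / cos e) by (field; split; lra).
          apply Rmult_le_reg_r with (cos e); [lra|].
          replace (x * sin e / cos e * cos e) with (x * sin e) by (field; lra). nra.
      - unfold Rpower, g. rewrite ln_exp. replace (p * (ln (K + 1) / p)) with (ln (K+1)) by (field; lra).
        apply exp_ln. lra. }
    pose proof (Rpower_gt0 (x / sin x) (2*p)). lra.
  -
    subst p. pose proof PI2_3_2.
    destruct (H 1 ltac:(lra)) as [_ HF2].
    rewrite Rmult_0_r, !Rpower_zero in HF2. lra.
  -
    set (M := Rpower (PI/2) (2*p)).
    assert (HM : M < 2).
    { rewrite <- Rpower_PI2_cc. apply Rpower_lt; lra. }
    assert (HM0 : 0 < M) by apply Rpower_gt0.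
    set (d := 2 - M).
    set (eta := ln (1 + d/4) / (2*p)).
    assert (Heta : 0 < eta).
    { unfold eta. apply Rdiv_lt_0_compat; [|lra]. rewrite <- ln_1. apply ln_increasing; unfold d; lra. }
    set (beta := exp (ln (d/4) / p)).
    assert (Hbeta : 0 < beta) by apply exp_pos.
    assert (Hexp : exp (- eta) < 1) by (rewrite <- exp_0; apply exp_increasing; lra).
    set (e := Rmin (1/2) (Rmin (1 - exp (-eta)) (beta/3))).
    assert (He : 0 < e <= 1/2).
    { unfold e. split. apply Rmin_glb_lt; [lra|]. apply Rmin_glb_lt; lra. apply Rmin_l. }
    assert (He1 : e <= 1 - exp (-eta)) by (unfold e; eapply Rle_trans; [apply Rmin_r| apply Rmin_l]).
    assert (He2 : e <= beta/3) by (unfold e; eapply Rle_trans; [apply Rmin_r| apply Rmin_r]).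
    destruct (near_pi2 e He) as (Hx & Es & Ec & Hc1 & Hc2 & Hse).
    destruct (H _ Hx) as [_ HF2].
    set (x := PI/2 - e) in *.
    assert (T1 : Rpower (x / sin x) (2*p) <= M * (1 + d/4)).
    { rewrite Es. apply Rle_trans with (Rpower (PI/2 * / cos e) (2*p)).
      - apply Rle_Rpower_l; [lra|]. split. apply Rdiv_lt_0_compat; lra.
        assert (E : PI/2 * / cos e - x / cos e = e / cos e) by (unfold x; field; lra).
        assert (0 <= e / cos e) by (apply div_nonneg; lra). lra.
      - rewrite <- Rpower_mult_distr by (try apply Rinv_0_lt_compat; lra). fold M.
        apply Rmult_le_compat_l; [lra|].
        rewrite Rpower_inv by lra. unfold Rpower. rewrite <- exp_Ropp.
        replace (1 + d/4) with (exp (2*p*eta)).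
        + apply exp_le_mono.
          assert (- eta <= ln (cos e)).
          { rewrite <- (ln_exp (-eta)). apply ln_le_mono. apply exp_pos. lra. }
          nra.
        + unfold eta. replace (2 * p * (ln (1 + d / 4) / (2 * p))) with (ln (1 + d/4)) by (field; lra).
          apply exp_ln. unfold d; lra. }
    assert (T2 : Rpower (x / tan x) p <= d/4).
    { replace (d/4) with (Rpower beta p).
      - apply Rle_Rpower_l; [lra|]. split.
        + unfold tan. rewrite Es, Ec. apply Rdiv_lt_0_compat; [lra|]. apply Rdiv_lt_0_compat; lra.
        + unfold tan. rewrite Es, Ec.
          replace (x / (cos e / sin e)) with (x * sin e / cos e) by (field; split; lra).
          apply Rmult_le_reg_r with (cos e); [lra|].
          replace (x * sin e / cos e * cos e) with (x * sin e) by (field; lra). nra.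
      - unfold Rpower, beta. rewrite ln_exp. replace (p * (ln (d / 4) / p)) with (ln (d/4)) by (field; lra).
        apply exp_ln. unfold d; lra. }
    unfold d in *. nra.
Qed.

Theorem corollary4p10 (p : R) :
  (forall x : R, 0 < x < PI / 2 ->
     Rpower (sin x / x) (2 * p) + Rpower (tan x / x) p >
       Rpower (x / sin x) (2 * p) + Rpower (x / tan x) p /\
     Rpower (x / sin x) (2 * p) + Rpower (x / tan x) p > 2)
  <-> p >= ln 2 / (2 * (ln PI - ln 2)).
Proof.
  assert (E0 : ln 2 / (2 * (ln PI - ln 2)) = cc/2) by (unfold cc; pose proof lnPI2_pos; field; lra).
  rewrite E0. split.
  - intros H. apply Rle_ge. apply onlyif_dir. exact H.
  - intros Hp x Hx. apply if_dir; [lra | exact Hx].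
Qed.
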